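(* Let $\varepsilon\ge0$ and let $x^\varepsilon_\omega=(y^\varepsilon_\omega,z^\varepsilon_\omega)\in\mathcal{X}$ be an $\varepsilon$-optimal solution of the penalty problem, i.e. $F_\omega(x^\varepsilon_\omega)\le F_\omega(x^\star_\omega)+\varepsilon$ and $z^\varepsilon_\omega(t)\ge0$ for a.e. $t\in\Omega$. Define $C_r=F(x^\star)-\operatorname{ess\,min}_{x\in\mathcal{X},z\ge0}F(x)$. Then $F(x^\varepsilon_\omega)\le F(x^\star)+\varepsilon$ and $r(x^\varepsilon_\omega)\le2\omega(C_r+\varepsilon)$.
   Context: Let $\Omega=(t_0,t_E)$ bounded, $t_1,\dots,t_M\in[t_0,t_E]$; $\mathcal{X}=(H^1(\Omega))^{n_y}\times(L^2(\Omega))^{n_z}$, $x=(y,z)$. For $f:\mathbb{R}^{n_y}\times\mathbb{R}^{n_y}\times\mathbb{R}^{n_z}\times\Omega\to\mathbb{R}$, $c$ (values in $\mathbb{R}^{n_c}$), $b:(\mathbb{R}^{n_y})^M\to\mathbb{R}^{n_b}$: $F(x)=\int_\Omega f(\dot y,y,z,t)dt$, $r(x)=\int_\Omega\|c(\dot y,y,z,t)\|_2^2dt+\|b(y(t_1),\dots,y(t_M))\|_2^2$. The DOP is to minimize $F$ subject to $b(\dots)=0$, $c(\dot y,y,z,t)=0$ and $z\ge0$ a.e.; by assumption it has a global minimizer $x^\star$ (so $r(x^\star)=0$). $F$ is bounded below on $\{x\in\mathcal{X}:z\ge0\}$. For $\omega\in(0,1)$, $F_\omega=F+\frac1{2\omega}r$;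 the penalty problem is to minimize $F_\omega$ over $\{x\in\mathcal{X}:z\ge0\text{ a.e.}\}$, and $x^\star_\omega$ is a minimizer of it. *)

(* Defs.v *)
From HB Require Import structures.
From mathcomp Require Import all_boot all_order all_algebra.
From mathcomp Require Import all_classical all_reals all_analysis.
Set Implicit Arguments. Unset Strict Implicit. Unset Printing Implicit Defensive.
Import Order.TTheory GRing.Theory Num.Theory.
Import numFieldNormedType.Exports.
Local Open Scope classical_set_scope.
Local Open Scope ring_scope.

Section DOP.
Variables (R : realType) (t0 tE : R) (ny nz nc nb M : nat).
Variables (tp : 'I_M -> R).
Variables (f : ('I_ny -> R) -> ('I_ny -> R) -> ('I_nz -> R) -> R -> R).
Variables (c : ('I_ny -> R) -> ('I_ny -> R) -> ('I_nz -> R) -> R -> ('I_nc -> R)).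
Variables (b : ('I_M -> 'I_ny -> R) -> ('I_nb -> R)).

Definition Omega : set R := `]t0, tE[.

Definition Xpair := ((R -> 'I_ny -> R) * (R -> 'I_nz -> R))%type.

Definition L2fun (w : R -> R) : Prop :=
  measurable_fun Omega w /\
  (\int[lebesgue_measure]_(t in Omega) ((w t) ^+ 2)%:E < +oo)%E.

(* scalar H^1(Omega), represented by its absolutely continuous representative:
   u(t) = u(t0) + \int_{t0}^t v with v in L^2(Omega) *)
Definition H1fun (u : R -> R) : Prop :=
  exists v : R -> R, L2fun v /\
    forall t, t0 <= t <= tE ->
      (u t)%:E = ((u t0)%:E + \int[lebesgue_measure]_(s in `[t0, t]) (v s)%:E)%E.

Definition inX (x : Xpair) : Prop :=
  (forall i, H1fun (fun t => x.1 t i)) /\ (forall j, L2fun (fun t => x.2 t j)).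

(* time derivative (exists a.e. for H^1 functions on an interval) *)
Definition ydot (y : R -> 'I_ny -> R) (t : R) : 'I_ny -> R :=
  fun i => derive1 (fun s => y s i) t.

Definition sqnorm n (v : 'I_n -> R) : R := \sum_(i < n) v i ^+ 2.

Definition Fobj (x : Xpair) : R :=
  Rintegral lebesgue_measure Omega (fun t => f (ydot x.1 t) (x.1 t) (x.2 t) t).

Definition rpen (x : Xpair) : R :=
  Rintegral lebesgue_measure Omega
    (fun t => sqnorm (c (ydot x.1 t) (x.1 t) (x.2 t) t))
  + sqnorm (b (fun k => x.1 (tp k))).

Definition Fomega (omega : R) (x : Xpair) : R := Fobj x + (2 * omega)^-1 * rpen x.

Definition zpos (x : Xpair) : Prop :=
  {ae lebesgue_measure, forall t, Omega t -> forall j, 0 <= x.2 t j}.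

Definition penFeasible (x : Xpair) : Prop := inX x /\ zpos x.

Definition dopFeasible (x : Xpair) : Prop :=
  inX x /\ b (fun k => x.1 (tp k)) = 0 /\
  {ae lebesgue_measure, forall t, Omega t -> c (ydot x.1 t) (x.1 t) (x.2 t) t = 0} /\
  zpos x.

Definition dopGlobalMin (xs : Xpair) : Prop :=
  dopFeasible xs /\ forall x, dopFeasible x -> Fobj xs <= Fobj x.

Definition penMin (omega : R) (xo : Xpair) : Prop :=
  penFeasible xo /\ forall x, penFeasible x -> Fomega omega xo <= Fomega omega x.

(* C_r = F(x_star) - ess min over {x in X, z >= 0} of F, read as an infimum *)
Definition Cr (xs : Xpair) : R := Fobj xs - inf [set Fobj x | x in penFeasible].

End DOP.

(* Main.v *)
Require Import Defs.
From HB Require Import structures.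
From mathcomp Require Import all_boot all_order all_algebra.
From mathcomp Require Import all_classical all_reals all_analysis.
From mathcomp Require Import lra measurable_realfun.
Import Order.TTheory GRing.Theory Num.Theory.
Local Open Scope classical_set_scope.
Local Open Scope ring_scope.
Import HBNNSimple.

Lemma sqnorm_ge0 (R : realType) n (v : 'I_n -> R) : 0 <= sqnorm v.
Proof. by rewrite /sqnorm; apply: sumr_ge0 => i _; exact: sqr_ge0. Qed.

Lemma sqnorm0 (R : realType) n : sqnorm (0 : 'I_n -> R) = 0.
Proof. by rewrite /sqnorm big1 // => i _; rewrite /= expr0n. Qed.

Lemma ae_zero_integral (R : realType) (D : set R) (g : R -> R) :
  (forall t, 0 <= g t) ->
  {ae (@lebesgue_measure R), forall t, D t -> g t = 0} ->
  (\int[lebesgue_measure]_(t in D) (g t)%:E = 0)%E.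
Proof.
move=> g0 hae.
rewrite ge0_integralE; last by move=> x _; rewrite lee_fin.
apply/eqP; rewrite eq_le; apply/andP; split; last first.
  apply: ereal_sup_ubound; exists nnsfun0 => //; last exact: sintegral0.
  by move=> x /=; rewrite patchE; case: ifPn => _; rewrite lee_fin.
apply/ge_ereal_sup => _ [h /= hle <-].
have E := @integral_nnsfun _ _ _ (@lebesgue_measure R) setT measurableT h.
rewrite patch_setT in E; rewrite -E.
rewrite (ae_eq_integral (cst 0%E)) //.
- by rewrite integral0.
- apply/measurable_EFinP; exact: measurable_funPT.
- case: hae => N [mN N0 sN]; exists N; split => //.
  apply: subset_trans sN; apply: subsetC => x Hx _ /=.
  apply/eqP; rewrite eq_le; apply/andP; split; last by rewrite lee_fin; exact: fun_ge0.
  apply: (le_trans (hle x)); rewrite patchE; case: ifPn => // /set_mem Dx.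
  by rewrite Hx.
Qed.

Theorem mainTheorem10 (R : realType) (t0 tE : R) (ny nz nc nb M : nat)
  (tp : 'I_M -> R)
  (f : ('I_ny -> R) -> ('I_ny -> R) -> ('I_nz -> R) -> R -> R)
  (c : ('I_ny -> R) -> ('I_ny -> R) -> ('I_nz -> R) -> R -> ('I_nc -> R))
  (b : ('I_M -> 'I_ny -> R) -> ('I_nb -> R))
  (xs xo xe : Xpair R ny nz) (omega eps : R) :
  t0 < tE ->
  (forall k, t0 <= tp k <= tE) ->
  dopGlobalMin t0 tE tp f c b xs ->
  (exists m : R, forall x, penFeasible t0 tE x -> m <= Fobj t0 tE f x) ->
  0 < omega < 1 ->
  penMin t0 tE tp f c b omega xo ->
  0 <= eps ->
  penFeasible t0 tE xe ->
  Fomega t0 tE tp f c b omega xe <= Fomega t0 tE tp f c b omega xo + eps ->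
  Fobj t0 tE f xe <= Fobj t0 tE f xs + eps /\
  rpen t0 tE tp c b xe <= 2 * omega * (Cr t0 tE f xs + eps).
Proof.
move=> _ _ [[inXs [bs [cs zs]]] _] [m hm] /andP[om0 om1] [_ hxo] eps0 fe hle.
have rs0 : rpen t0 tE tp c b xs = 0.
  rewrite /rpen bs sqnorm0 addr0 /Rintegral.
  rewrite (@ae_zero_integral R _ _ (fun t => @sqnorm_ge0 R _ (c (ydot xs.1 t) (xs.1 t) (xs.2 t) t))) //=.
  case: cs => N [mN N0 sN]; exists N; split => //.
  apply: subset_trans sN; apply: subsetC => t H Ot /=.
  by rewrite H // sqnorm0.
have re0 : 0 <= rpen t0 tE tp c b xe.
  rewrite /rpen; apply: addr_ge0; last exact: sqnorm_ge0.
  by apply: Rintegral_ge0 => t _; exact: sqnorm_ge0.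
have h1 := hxo xs (conj inXs zs).
have hinf : inf [set Fobj t0 tE f x | x in @penFeasible R t0 tE ny nz] <= Fobj t0 tE f xe.
  apply: ge_inf; last by exists xe.
  by exists m => _ [x px <-]; exact: hm.
move: hle h1; rewrite /Fomega rs0 mulr0 addr0 /Cr.
set w := 2 * omega.
have w0 : 0 < w by rewrite /w; lra.
set u := w^-1 * rpen t0 tE tp c b xe.
have ru : rpen t0 tE tp c b xe = w * u by rewrite /u mulrA mulfV ?gt_eqF // mul1r.
have u0 : 0 <= u by rewrite /u mulr_ge0 // invr_ge0 ltW.
rewrite ru => h2 h3; split; first lra.
rewrite ler_pM2l //; lra.
Qed.
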